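(* Let $H$ be a group and $\Delta$ an angled $H$-graph with finitely many $H$-orbits of cells. Let $\Delta_1,\dots,\Delta_\ell$ be representatives of the $H$-orbits of connected components of $\Delta$, and let $H_i$ be the stabilizer of $\Delta_i$. If $\kappa(H_i,\Delta_i)\le\pi\cdot|H_i|^{-1}$ for $1\le i\le\ell$, then $\kappa(H,\Delta)\le\kappa(H_i,\Delta_i)$ for $1\le i\le\ell$.
   Context: An angled $K$-graph is a graph $\Gamma$ with a $K$-action (without inversions) and a $K$-invariant map $\measuredangle$ from edges to $\mathbb R$. For a group $K$, $|K|^{-1}=1/|K|$ if $K$ is finite and $0$ otherwise. For a cocompact angled $K$-graph, $\kappa(K,\Gamma)=2\pi|K|^{-1}-\sum_{v}\pi|K_v|^{-1}+\sum_{e}(\pi-\measuredangle(e))|K_e|^{-1}$, with sums over representatives of the $K$-orbits of vertices and of edges and $K_v,K_e$ their stabilizers. *)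

(* Defs.v *)
From Stdlib Require Import Reals List Lia Relations ClassicalEpsilon.
Import ListNotations.
Open Scope R_scope.

Record Group := {
  gcar :> Type;
  gmul : gcar -> gcar -> gcar;
  gone : gcar;
  ginv : gcar -> gcar;
  gmulA : forall a b c, gmul a (gmul b c) = gmul (gmul a b) c;
  gmul1 : forall a, gmul gone a = a;
  gmulV : forall a, gmul (ginv a) a = gone
}.

(** An angled H-graph.  Graphs may have loops and multiple edges.  Since the
    action is without inversions, each edge carries an H-invariant orientation
    (src, tgt) preserved by the action. *)
Record angled_graph (H : Group) := {
  V : Type;
  E : Type;
  src : E -> V;
  tgt : E -> V;
  actV : H -> V -> V;
  actE : H -> E -> E;
  actV1 : forall v, actV (gone H) v = v;
  actVM : forall g h v, actV (gmul H g h) v = actV g (actV h v);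
  actE1 : forall e, actE (gone H) e = e;
  actEM : forall g h e, actE (gmul H g h) e = actE g (actE h e);
  act_src : forall h e, src (actE h e) = actV h (src e);
  act_tgt : forall h e, tgt (actE h e) = actV h (tgt e);
  angle : E -> R;
  angle_inv : forall h e, angle (actE h e) = angle e
}.
Arguments V {H}. Arguments E {H}. Arguments src {H}. Arguments tgt {H}.
Arguments actV {H}. Arguments actE {H}. Arguments angle {H}.

(** Cardinality: |S|^{-1} = 1/|S| if S finite, 0 otherwise. *)
Definition has_card {T : Type} (S : T -> Prop) (n : nat) : Prop :=
  exists l : list T, NoDup l /\ length l = n /\ (forall x, S x <-> In x l).

Definition inv_card {T : Type} (S : T -> Prop) : R :=
  match excluded_middle_informative (exists n, has_card S n) with
  | left h => / INR (proj1_sig (constructive_indefinite_description _ h))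
  | right _ => 0
  end.

Definition orbit_reps {H : Group} {X : Type} (K : H -> Prop)
  (act : H -> X -> X) (S : X -> Prop) (l : list X) : Prop :=
  (forall x, In x l -> S x) /\
  (forall x, S x -> exists r k, In r l /\ K k /\ act k r = x) /\
  (forall i j r s k, nth_error l i = Some r -> nth_error l j = Some s ->
     K k -> act k r = s -> i = j).

Definition stabV {H : Group} (D : angled_graph H) (K : H -> Prop) (v : V D) :
  H -> Prop := fun k => K k /\ actV D k v = v.
Definition stabE {H : Group} (D : angled_graph H) (K : H -> Prop) (e : E D) :
  H -> Prop := fun k => K k /\ actE D k e = e.

Definition sumR {T : Type} (f : T -> R) (l : list T) : R :=
  fold_right Rplus 0 (map f l).

Definition kappa_reps {H : Group} (D : angled_graph H) (K : H -> Prop)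
  (rv : list (V D)) (re : list (E D)) : R :=
  2 * PI * inv_card K
  - sumR (fun v => PI * inv_card (stabV D K v)) rv
  + sumR (fun e => (PI - angle D e) * inv_card (stabE D K e)) re.

Definition cocompact {H : Group} (D : angled_graph H) (K : H -> Prop)
  (Vs : V D -> Prop) (Es : E D -> Prop) : Prop :=
  exists (rv : list (V D)) (re : list (E D)),
    orbit_reps K (actV D) Vs rv /\ orbit_reps K (actE D) Es re.

(** kappa(K, (Vs,Es)) for the action of the subgroup K on the subgraph
    (Vs, Es); representatives are chosen (value is independent of the choice).
    Defaults to 0 when the action is not cocompact (never used then). *)
Definition kappa {H : Group} (D : angled_graph H) (K : H -> Prop)
  (Vs : V D -> Prop) (Es : E D -> Prop) : R :=
  match excluded_middle_informative (cocompact D K Vs Es) with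
  | left h =>
      let w := constructive_indefinite_description _ h in
      let w2 := constructive_indefinite_description _ (proj2_sig w) in
      kappa_reps D K (proj1_sig w) (proj1_sig w2)
  | right _ => 0
  end.

Definition allH {H : Group} : H -> Prop := fun _ => True.
Definition allV {H : Group} (D : angled_graph H) : V D -> Prop := fun _ => True.
Definition allE {H : Group} (D : angled_graph H) : E D -> Prop := fun _ => True.

Definition adj {H : Group} (D : angled_graph H) (u w : V D) : Prop :=
  exists e, (src D e = u /\ tgt D e = w) \/ (src D e = w /\ tgt D e = u).
Definition connected {H : Group} (D : angled_graph H) : V D -> V D -> Prop :=
  clos_refl_trans (V D) (adj D).

Definition compV {H : Group} (D : angled_graph H) (v : V D) : V D -> Prop :=
  fun w => connected D v w.
Definition compE {H : Group} (D : angled_graph H) (v : V D) : E D -> Prop :=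
  fun e => connected D v (src D e).

(** Stabilizer in H of the component of v: h·Comp(v) = Comp(v). *)
Definition stab_comp {H : Group} (D : angled_graph H) (v : V D) : H -> Prop :=
  fun h => connected D v (actV D h v).

Definition component_orbit_reps {H : Group} (D : angled_graph H)
  (reps : list (V D)) : Prop :=
  (forall w, exists r h, In r reps /\ connected D (actV D h r) w) /\
  (forall i j r s h, nth_error reps i = Some r -> nth_error reps j = Some s ->
     connected D (actV D h r) s -> i = j).

(* Main.v *)
Require Import Defs.
From Stdlib Require Import Reals List Lra Lia Relations ClassicalEpsilon Classical FinFun.
Import ListNotations.
Open Scope R_scope.

Lemma gmulVr (H : Group) (a : H) : gmul H a (ginv H a) = gone H.
Proof.
  rewrite <- (gmul1 H (gmul H a (ginv H a))).
  rewrite <- (gmulV H (ginv H a)) at 1.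
  rewrite <- gmulA. rewrite (gmulA H (ginv H a) a (ginv H a)).
  rewrite gmulV, gmul1, gmulV. reflexivity.
Qed.

Lemma gmul1r (H : Group) (a : H) : gmul H a (gone H) = a.
Proof. rewrite <- (gmulV H a), gmulA, gmulVr, gmul1. reflexivity. Qed.

Inductive NDR {X} (Rl : X -> X -> Prop) : list X -> Prop :=
| NDR_nil : NDR Rl []
| NDR_cons a l : (forall b, In b l -> ~ Rl a b) -> NDR Rl l -> NDR Rl (a :: l).

Lemma NDR_of_nth {X} (Rl Q : X -> X -> Prop) l :
  (forall r s, In r l -> In s l -> Rl r s -> Q r s) ->
  (forall i j r s, nth_error l i = Some r -> nth_error l j = Some s -> Q r s -> i = j) ->
  NDR Rl l.
Proof.
  induction l as [|a l IH]; intros HRQ Hn; constructor.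
  - intros b Hb HR. destruct (In_nth_error l b Hb) as [j Hj].
    assert (E0 : (0 = S j)%nat).
    { apply (Hn 0%nat (S j) a b); simpl; auto. apply HRQ; simpl; auto. }
    discriminate.
  - apply IH.
    + intros; apply HRQ; simpl; auto.
    + intros i j r s Hi Hj Hq.
      assert (E0 : S i = S j) by (apply (Hn (S i) (S j) r s); auto). lia.
Qed.

Lemma nth_of_NDR {X} (Rl : X -> X -> Prop) l :
  (forall x y, Rl x y -> Rl y x) -> NDR Rl l ->
  forall i j r s, nth_error l i = Some r -> nth_error l j = Some s -> Rl r s -> i = j.
Proof.
  intros Hsym Hnd. induction Hnd as [|a l Ha Hnd IH]; intros i j r s Hi Hj Hq.
  - destruct i; discriminate.
  - destruct i, j; simpl in *; auto.
    + inversion Hi; subst. exfalso. exact (Ha s (nth_error_In _ _ Hj) Hq).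
    + inversion Hj; subst. exfalso. exact (Ha r (nth_error_In _ _ Hi) (Hsym _ _ Hq)).
    + f_equal. eapply IH; eauto.
Qed.

Lemma NDR_app {X} (Rl : X -> X -> Prop) l1 l2 :
  NDR Rl l1 -> NDR Rl l2 -> (forall a b, In a l1 -> In b l2 -> ~ Rl a b) ->
  NDR Rl (l1 ++ l2).
Proof.
  induction 1 as [|a l Ha Hn IH]; intros H2 Hc; simpl; auto.
  constructor.
  - intros b Hb. apply in_app_or in Hb. destruct Hb as [Hb|Hb]; auto.
    apply Hc; simpl; auto.
  - apply IH; auto. intros; apply Hc; simpl; auto.
Qed.

Lemma NDR_remove {X} (Rl : X -> X -> Prop) (Hsym : forall x y, Rl x y -> Rl y x) l1 a l2 :
  NDR Rl (l1 ++ a :: l2) -> NDR Rl (l1 ++ l2) /\ (forall y, In y (l1 ++ l2) -> ~ Rl a y).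
Proof.
  induction l1 as [|b l1 IH]; simpl; intros Hn.
  - inversion Hn; subst. auto.
  - inversion Hn as [|? ? Hb Hn']; subst. destruct (IH Hn') as [H1 H2]. split.
    + constructor; auto. intros c Hc. apply Hb. apply in_or_app. apply in_app_or in Hc.
      simpl; tauto.
    + intros y [<-|Hy]; auto. intro R1. apply (Hb a); auto.
      apply in_or_app; simpl; auto.
Qed.

Lemma NDR_filter {X} (Rl : X -> X -> Prop) (b : X -> bool) l :
  NDR Rl l -> NDR Rl (filter b l).
Proof.
  induction 1 as [|a l Ha Hn IH]; simpl; [constructor|].
  destruct (b a); auto. constructor; auto.
  intros c Hc. apply filter_In in Hc. apply Ha; tauto.
Qed.

Lemma NDR_map {X} (Rl : X -> X -> Prop) (f : X -> X) l
  (Hsym : forall x y, Rl x y -> Rl y x)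
  (Htr : forall x y z, Rl x y -> Rl y z -> Rl x z)
  (Hf : forall x, Rl x (f x)) :
  NDR Rl l -> NDR Rl (map f l).
Proof.
  induction 1 as [|a l Ha Hn IH]; simpl; [constructor|].
  constructor; auto. intros b Hb HR. apply in_map_iff in Hb as [c [<- Hc]].
  apply (Ha c Hc). eapply Htr; [apply Hf|]. eapply Htr; [apply HR|]. apply Hsym, Hf.
Qed.

Lemma NDR_flat_map {X Y} (Rl : X -> X -> Prop) (Rc : Y -> Y -> Prop) (g : Y -> list X) reps :
  NDR Rc reps -> (forall w, In w reps -> NDR Rl (g w)) ->
  (forall w w' a b, In w reps -> In w' reps -> In a (g w) -> In b (g w') -> Rl a b -> Rc w w') ->
  NDR Rl (flat_map g reps).
Proof.
  induction reps as [|w reps IH]; intros Hn Hg Hc; simpl; [constructor|].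
  inversion Hn as [|? ? Hw Hn']; subst. apply NDR_app.
  - apply Hg; simpl; auto.
  - apply IH; auto. intros; apply Hg; simpl; auto.
    intros; eapply Hc; simpl; eauto.
  - intros a b Ha Hb Rab. apply in_flat_map in Hb as [w' [Hw' Hb]].
    apply (Hw w' Hw'). eapply Hc; simpl; eauto.
Qed.

Lemma sumR_app {T} (f : T -> R) l1 l2 : sumR f (l1 ++ l2) = sumR f l1 + sumR f l2.
Proof. induction l1; unfold sumR in *; simpl; [lra|]. rewrite IHl1. lra. Qed.

Lemma sumR_cons {T} (f : T -> R) a l : sumR f (a :: l) = f a + sumR f l.
Proof. reflexivity. Qed.

Lemma sumR_flat_map {T U} (f : T -> R) (g : U -> list T) l :
  sumR f (flat_map g l) = sumR (fun w => sumR f (g w)) l.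
Proof. induction l; simpl; [reflexivity|]. rewrite sumR_app, sumR_cons, IHl. reflexivity. Qed.

Lemma sumR_ext_in {T} (f g : T -> R) l : (forall x, In x l -> f x = g x) -> sumR f l = sumR g l.
Proof. induction l; intros Hfg; [reflexivity|]. rewrite !sumR_cons, Hfg, IHl; simpl; auto.
 intros; apply Hfg; simpl; auto. Qed.

Lemma sumR_minus {T} (f g : T -> R) l : sumR (fun w => f w - g w) l = sumR f l - sumR g l.
Proof. induction l; [unfold sumR; simpl; lra|]. rewrite !sumR_cons, IHl. lra. Qed.

Lemma sumR_nonpos {T} (f : T -> R) l : (forall x, In x l -> f x <= 0) -> sumR f l <= 0.
Proof.
  induction l; intros Hf; [unfold sumR; simpl; lra|]. rewrite sumR_cons.
  assert (f a <= 0) by (apply Hf; simpl; auto).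
  assert (sumR f l <= 0) by (apply IHl; intros; apply Hf; simpl; auto). lra.
Qed.

Definition transv {X} (Rl : X -> X -> Prop) (S : X -> Prop) l :=
  (forall x, In x l -> S x) /\ (forall x, S x -> exists r, In r l /\ Rl r x) /\ NDR Rl l.

Lemma transv_sum {X} (Rl : X -> X -> Prop) (f : X -> R)
  (Hsym : forall x y, Rl x y -> Rl y x)
  (Htr : forall x y z, Rl x y -> Rl y z -> Rl x z)
  (Hf : forall x y, Rl x y -> f x = f y) :
  forall l l' S, transv Rl S l -> transv Rl S l' -> sumR f l = sumR f l'.
Proof.
  induction l as [|a l IH]; intros l' S [H1 [H2 H3]] [H1' [H2' H3']].
  - destruct l' as [|b l'']; [reflexivity|]. exfalso.
    destruct (H2 b (H1' b (or_introl eq_refl))) as [r [[] _]].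
  - assert (Sa : S a) by (apply H1; left; auto).
    destruct (H2' a Sa) as [a' [Ha' Ra'a]].
    destruct (in_split _ _ Ha') as [l1 [l2 E]]. subst l'.
    inversion H3 as [|? ? Hna Hnl]; subst.
    destruct (NDR_remove Rl Hsym l1 a' l2 H3') as [Hnd12 Hna'].
    assert (Hs : sumR f l = sumR f (l1 ++ l2)).
    { apply (IH _ (fun x => S x /\ ~ Rl a x)). split; [|split].
      - intros x Hx; split; [apply H1; right; auto | apply Hna; auto].
      - intros x [Sx Nx]. destruct (H2 x Sx) as [r [[<-|Hr] Rr]]; [contradiction|eauto].
      - auto.
      - split; [|split].
        + intros x Hx. split.
          * apply H1'. apply in_app_or in Hx. apply in_or_app. simpl; tauto.
          * intro Rax. apply (Hna' x Hx). eapply Htr; eauto.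
        + intros x [Sx Nx]. destruct (H2' x Sx) as [r [Hr Rr]].
          apply in_app_or in Hr. destruct Hr as [Hr|[<-|Hr]].
          * exists r; split; auto. apply in_or_app; auto.
          * exfalso. apply Nx. eapply Htr; [apply Hsym; eauto| eauto].
          * exists r; split; auto. apply in_or_app; auto.
        + auto. }
    rewrite sumR_cons, Hs, !sumR_app, sumR_cons. rewrite (Hf a' a Ra'a). lra.
Qed.

Lemma has_card_uniq {T} (S : T -> Prop) n m : has_card S n -> has_card S m -> n = m.
Proof.
  intros [l1 [N1 [L1 I1]]] [l2 [N2 [L2 I2]]]. subst.
  apply Nat.le_antisymm; apply NoDup_incl_length; auto; intros x Hx.
  - apply I2, I1, Hx.
  - apply I1, I2, Hx.
Qed.

Lemma inv_card_of {T} (S : T -> Prop) n : has_card S n -> inv_card S = / INR n.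
Proof.
  intros Hc. unfold inv_card. destruct (excluded_middle_informative _) as [e|e].
  - destruct (constructive_indefinite_description _ e) as [m Hm]; simpl.
    rewrite (has_card_uniq S m n); auto.
  - exfalso; eauto.
Qed.

Lemma inv_card_inf {T} (S : T -> Prop) : ~ (exists n, has_card S n) -> inv_card S = 0.
Proof.
  intros Hn. unfold inv_card. destruct (excluded_middle_informative _) as [e|e]; auto.
  contradiction.
Qed.

Lemma inv_card_nonneg {T} (S : T -> Prop) : 0 <= inv_card S.
Proof.
  unfold inv_card. destruct (excluded_middle_informative _) as [e|e]; [|lra].
  destruct (constructive_indefinite_description _ e) as [n Hn]; simpl.
  clear Hn. destruct n. simpl; rewrite Rinv_0; lra.
  left; apply Rinv_0_lt_compat, lt_0_INR; lia.
Qed.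

Lemma inv_card_ext {T T'} (S : T -> Prop) (S' : T' -> Prop) :
  (forall n, has_card S n <-> has_card S' n) -> inv_card S = inv_card S'.
Proof.
  intros Heq. destruct (classic (exists n, has_card S n)) as [[n Hn]|Hn].
  - rewrite (inv_card_of S n Hn), (inv_card_of S' n); auto. apply Heq; auto.
  - rewrite !inv_card_inf; auto. intros [n Hn']; apply Hn; exists n; apply Heq; auto.
Qed.

Lemma inv_card_eqv {T} (S S' : T -> Prop) : (forall x, S x <-> S' x) -> inv_card S = inv_card S'.
Proof.
  intros He. apply inv_card_ext. intros n; split; intros [l [N1 [L1 I1]]]; exists l;
  repeat split; auto; intros Hx.
  - apply I1, He, Hx.
  - apply He, I1, Hx.
  - apply I1, He, Hx.
  - apply He, I1, Hx.
Qed.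

Lemma has_card_bij {T} (S S' : T -> Prop) (f g : T -> T)
  (Hf : forall x, S x -> S' (f x)) (Hg : forall y, S' y -> S (g y))
  (Hgf : forall x, g (f x) = x) (Hfg : forall y, f (g y) = y) n :
  has_card S n -> has_card S' n.
Proof.
  intros [l [Nl [Ll Il]]]. exists (map f l). split; [|split].
  - apply Injective_map_NoDup; auto. intros x y E. rewrite <- (Hgf x), <- (Hgf y), E. auto.
  - rewrite length_map; auto.
  - intros y; split.
    + intro Sy. rewrite <- (Hfg y). apply in_map. apply Il. apply Hg. auto.
    + intros Hin. apply in_map_iff in Hin as [x [<- Hx]]. apply Hf, Il, Hx.
Qed.

Lemma inv_card_sub {T} (S : T -> Prop) (x0 : T) (Sx0 : S x0) :
  inv_card (fun _ : T => True) <= inv_card S.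
Proof.
  destruct (classic (exists n, has_card (fun _ : T => True) n)) as [[n Hc]|Hn].
  - pose proof Hc as [l [Nl [Ll Il]]].
    set (lS := filter (fun x => if excluded_middle_informative (S x) then true else false) l).
    assert (hc : has_card S (length lS)).
    { exists lS. split; [apply NoDup_filter; auto|split; auto].
      intros x. unfold lS. rewrite filter_In. split.
      - intros Sx. split; [apply Il; auto|]. destruct (excluded_middle_informative (S x)); tauto.
      - intros [_ E]. destruct (excluded_middle_informative (S x)); auto; discriminate. }
    rewrite (inv_card_of _ n Hc), (inv_card_of S _ hc).
    assert (Hin : In x0 lS).
    { unfold lS. apply filter_In. split; [apply Il; auto|].
      destruct (excluded_middle_informative (S x0)); tauto. }
    assert (H1 : (1 <= length lS)%nat) by (destruct lS; [destruct Hin|simpl; lia]).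
    assert (H2 : (length lS <= n)%nat).
    { subst n. apply NoDup_incl_length; [apply NoDup_filter; auto|].
      intros x Hx. apply filter_In in Hx. tauto. }
    apply Rinv_le_contravar; [apply lt_0_INR; lia| apply le_INR; lia].
  - rewrite inv_card_inf; auto. apply inv_card_nonneg.
Qed.

Definition RH {H : Group} {X} (act : H -> X -> X) (x y : X) := exists h, act h x = y.

Lemma RH_sym {H : Group} {X} (act : H -> X -> X)
  (act1 : forall x, act (gone H) x = x)
  (actM : forall g h x, act (gmul H g h) x = act g (act h x)) x y :
  RH act x y -> RH act y x.
Proof. intros [h <-]. exists (ginv H h). rewrite <- actM, gmulV, act1. auto. Qed.

Lemma RH_trans {H : Group} {X} (act : H -> X -> X)
  (actM : forall g h x, act (gmul H g h) x = act g (act h x)) x y z :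
  RH act x y -> RH act y z -> RH act x z.
Proof. intros [h <-] [k <-]. exists (gmul H k h). rewrite actM. auto. Qed.

Lemma stab_conj {H : Group} {X} (act : H -> X -> X)
  (act1 : forall x, act (gone H) x = x)
  (actM : forall g h x, act (gmul H g h) x = act g (act h x)) g x :
  inv_card (fun k => @allH H k /\ act k (act g x) = act g x) =
  inv_card (fun k => @allH H k /\ act k x = x).
Proof.
  set (f := fun k => gmul H (gmul H (ginv H g) k) g).
  set (f' := fun k => gmul H (gmul H g k) (ginv H g)).
  assert (E1 : forall k, f (f' k) = k).
  { intros k; unfold f, f'. rewrite <- !gmulA. rewrite gmulV, gmul1r, gmulA, gmulV, gmul1. auto. }
  assert (E2 : forall k, f' (f k) = k).
  { intros k; unfold f, f'. rewrite <- !gmulA. rewrite gmulVr, gmul1r, gmulA, gmulVr, gmul1. auto. }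
  assert (M1 : forall k, allH k /\ act k (act g x) = act g x -> allH (f k) /\ act (f k) x = x).
  { intros k [_ Hk]; split; [exact I|]. unfold f. rewrite !actM, Hk, <- actM, gmulV, act1. auto. }
  assert (M2 : forall k, allH k /\ act k x = x -> allH (f' k) /\ act (f' k) (act g x) = act g x).
  { intros k [_ Hk]; split; [exact I|]. unfold f'. rewrite <- !actM.
    rewrite <- !gmulA, gmulV, gmul1r, actM, Hk. auto. }
  apply inv_card_ext. intros n; split.
  - apply (has_card_bij _ _ f f'); auto.
  - apply (has_card_bij _ _ f' f); auto.
Qed.

Lemma conn_sym {H : Group} (D : angled_graph H) u w : connected D u w -> connected D w u.
Proof.
  induction 1.
  - apply rt_step. destruct H0 as [e [[? ?]|[? ?]]]; exists e; auto.
  - apply rt_refl.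
  - eapply rt_trans; eauto.
Qed.

Lemma conn_trans {H : Group} (D : angled_graph H) u v w :
  connected D u v -> connected D v w -> connected D u w.
Proof. apply rt_trans. Qed.

Lemma conn_act {H : Group} (D : angled_graph H) h u w :
  connected D u w -> connected D (actV D h u) (actV D h w).
Proof.
  induction 1.
  - apply rt_step. destruct H0 as [e [[E1 E2]|[E1 E2]]]; exists (actE D h e);
    rewrite act_src, act_tgt; [left|right]; subst; auto.
  - apply rt_refl.
  - eapply rt_trans; eauto.
Qed.

Lemma comp_stab {H : Group} (D : angled_graph H) {X} (act : H -> X -> X) (p : X -> V D)
  (hp : forall h x, p (act h x) = actV D h (p x)) w x h :
  connected D w (p x) -> connected D w (p (act h x)) -> stab_comp D w h.
Proof.
  intros C1 C2. unfold stab_comp. apply conn_sym.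
  apply conn_trans with (p (act h x)).
  - rewrite hp. apply conn_act; auto.
  - apply conn_sym; auto.
Qed.

Lemma decomp {H : Group} (D : angled_graph H) {X} (act : H -> X -> X)
  (act1 : forall x, act (gone H) x = x)
  (actM : forall g h x, act (gmul H g h) x = act g (act h x))
  (p : X -> V D) (hp : forall h x, p (act h x) = actV D h (p x))
  (f : X -> R) (finv : forall h x, f (act h x) = f x)
  reps (Hreps : component_orbit_reps D reps)
  rv (Hrv : orbit_reps allH act (fun _ => True) rv)
  (g : V D -> list X)
  (Hg : forall w, In w reps -> orbit_reps (stab_comp D w) act (fun x => connected D w (p x)) (g w)) :
  sumR f rv = sumR (fun w => sumR f (g w)) reps.
Proof.
  rewrite <- sumR_flat_map.
  apply (transv_sum (RH act) f (RH_sym act act1 actM) (RH_trans act actM)) with (S := fun _ => True).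
  - intros x y [h <-]. symmetry; apply finv.
  - destruct Hrv as [H1 [H2 H3]]. split; [|split]; auto.
    + intros x _. destruct (H2 x I) as [r [k [Hr [_ Hk]]]]. exists r; split; auto. exists k; auto.
    + apply NDR_of_nth with (Q := fun r s => exists k, allH k /\ act k r = s).
      * intros r s _ _ [k Hk]; exists k; split; [exact I|auto].
      * intros i j r s Hi Hj [k [Kk Hk]]. eapply H3; eauto.
  - split; [|split]; auto.
    + intros x _. destruct Hreps as [R1 R2].
      destruct (R1 (p x)) as [r [h0 [Hr Hc]]].
      set (y := act (ginv H h0) x).
      assert (Sy : connected D r (p y)).
      { unfold y. rewrite hp. rewrite <- (actV1 _ D r), <- (gmulV H h0), (actVM _ D).
        apply conn_act; auto. }
      destruct (Hg r Hr) as [_ [G2 _]].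
      destruct (G2 y Sy) as [s [k [Hs [_ Hk]]]].
      exists s. split.
      * apply in_flat_map. eauto.
      * exists (gmul H h0 k). rewrite actM, Hk. unfold y. rewrite <- actM, gmulVr, act1. auto.
    + apply NDR_flat_map with (Rc := fun v w => exists h, connected D (actV D h v) w).
      * apply NDR_of_nth with (Q := fun v w => exists h, connected D (actV D h v) w); auto.
        intros i j r s Hi Hj [h Hh]. destruct Hreps as [_ R2]. eapply R2; eauto.
      * intros w Hw. destruct (Hg w Hw) as [G1 [_ G3]].
        apply NDR_of_nth with (Q := fun r s => exists k, stab_comp D w k /\ act k r = s).
        -- intros r s Hr Hs [h Hh]. exists h; split; auto.
           apply (comp_stab D act p hp w r h); auto. rewrite Hh; auto.
        -- intros i j r s Hi Hj [k [Kk Hk]]. eapply G3; eauto.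
      * intros w w' a b Hw Hw' Ha Hb [h Hh]. exists h.
        destruct (Hg w Hw) as [G1 _]. destruct (Hg w' Hw') as [G1' _].
        apply conn_trans with (p b).
        -- rewrite <- Hh, hp. apply conn_act; auto.
        -- apply conn_sym; auto.
Qed.

Lemma sub_reps {H : Group} (D : angled_graph H) {X} (act : H -> X -> X)
  (act1 : forall x, act (gone H) x = x)
  (actM : forall g h x, act (gmul H g h) x = act g (act h x))
  (p : X -> V D) (hp : forall h x, p (act h x) = actV D h (p x))
  rv (Hrv : orbit_reps allH act (fun _ => True) rv) w :
  exists lw, orbit_reps (stab_comp D w) act (fun x => connected D w (p x)) lw.
Proof.
  set (meets := fun r => exists h, connected D w (p (act h r))).
  set (pick := fun r => match excluded_middle_informative (meets r) with
                        | left e => proj1_sig (constructive_indefinite_description _ e)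
                        | right _ => gone H end).
  assert (Hpick : forall r, meets r -> connected D w (p (act (pick r) r))).
  { intros r Hm. unfold pick. destruct (excluded_middle_informative (meets r)); [|contradiction].
    destruct (constructive_indefinite_description _ m); simpl; auto. }
  set (b := fun r => if excluded_middle_informative (meets r) then true else false).
  assert (Hb : forall r, b r = true <-> meets r).
  { intros r; unfold b; destruct (excluded_middle_informative (meets r)); split; auto; discriminate. }
  destruct Hrv as [H1 [H2 H3]].
  exists (map (fun r => act (pick r) r) (filter b rv)). split; [|split].
  - intros x Hx. apply in_map_iff in Hx as [r [<- Hr]]. apply filter_In in Hr.
    apply Hpick, Hb; tauto.
  - intros x Sx. destruct (H2 x I) as [r [k [Hr [_ Hk]]]].
    assert (Mr : meets r) by (exists k; rewrite Hk; auto).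
    exists (act (pick r) r), (gmul H k (ginv H (pick r))).
    assert (Eq : act (gmul H k (ginv H (pick r))) (act (pick r) r) = x).
    { rewrite <- actM, <- gmulA, gmulV, gmul1r. auto. }
    split; [|split]; auto.
    + apply (in_map (fun r => act (pick r) r)). apply filter_In. split; auto. apply Hb; auto.
    + apply (comp_stab D act p hp w (act (pick r) r)); auto. rewrite Eq; auto.
  - intros i j r s k Hi Hj _ Hk.
    apply (nth_of_NDR (RH act) (map (fun r => act (pick r) r) (filter b rv)) (RH_sym act act1 actM)) with (i := i) (j := j) (r := r) (s := s); auto.
    + apply NDR_map; auto.
      * apply RH_sym; auto.
      * apply RH_trans; auto.
      * intros y; exists (pick y); auto.
      * apply NDR_filter. apply NDR_of_nth with (Q := fun r s => exists k, allH k /\ act k r = s).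
        -- intros r' s' _ _ [k' Hk']; exists k'; split; [exact I|auto].
        -- intros i' j' r' s' Hi' Hj' [k' [Kk Hk']]. eapply H3; eauto.
    + exists k; auto.
Qed.

Lemma kappa_eq {H : Group} (D : angled_graph H) K Vs Es :
  cocompact D K Vs Es -> exists rv re, orbit_reps K (actV D) Vs rv /\
    orbit_reps K (actE D) Es re /\ kappa D K Vs Es = kappa_reps D K rv re.
Proof.
  intros Hc. unfold kappa. destruct (excluded_middle_informative _) as [e|e]; [|contradiction].
  destruct (constructive_indefinite_description _ e) as [rv Hrv]; simpl.
  destruct (constructive_indefinite_description _ Hrv) as [re Hre]; simpl.
  exists rv, re. tauto.
Qed.

Theorem lemma7p1 (H : Group) (D : angled_graph H)
  (Hcoc : cocompact D allH (allV D) (allE D))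
  (reps : list (V D)) (Hreps : component_orbit_reps D reps)
  (Hk : forall v, In v reps ->
     kappa D (stab_comp D v) (compV D v) (compE D v)
       <= PI * inv_card (stab_comp D v)) :
  forall v, In v reps ->
    kappa D allH (allV D) (allE D)
      <= kappa D (stab_comp D v) (compV D v) (compE D v).
Proof.
  intros j Hj.
  destruct (kappa_eq D allH _ _ Hcoc) as [rv [re [Hrv [Hre Hkap]]]].
  assert (Hcw : forall w, cocompact D (stab_comp D w) (compV D w) (compE D w)).
  { intros w.
    destruct (sub_reps D (actV D) (actV1 _ D) (actVM _ D) (fun x => x) (fun _ _ => eq_refl) rv Hrv w)
      as [lv Hlv].
    destruct (sub_reps D (actE D) (actE1 _ D) (actEM _ D) (src D) (act_src _ D) re Hre w)
      as [le Hle].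
    exists lv, le. split; [exact Hlv|exact Hle]. }
  assert (Hch : forall w, exists pr : list (V D) * list (E D),
    orbit_reps (stab_comp D w) (actV D) (compV D w) (fst pr) /\
    orbit_reps (stab_comp D w) (actE D) (compE D w) (snd pr) /\
    kappa D (stab_comp D w) (compV D w) (compE D w) = kappa_reps D (stab_comp D w) (fst pr) (snd pr)).
  { intros w. destruct (kappa_eq _ _ _ _ (Hcw w)) as [a [b [? [? ?]]]]. exists (a, b); auto. }
  pose (gp := fun w => proj1_sig (constructive_indefinite_description _ (Hch w))).
  assert (Hgp : forall w,
    orbit_reps (stab_comp D w) (actV D) (compV D w) (fst (gp w)) /\
    orbit_reps (stab_comp D w) (actE D) (compE D w) (snd (gp w)) /\
    kappa D (stab_comp D w) (compV D w) (compE D w) = kappa_reps D (stab_comp D w) (fst (gp w)) (snd (gp w))).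
  { intro w. exact (proj2_sig (constructive_indefinite_description _ (Hch w))). }
  set (fA := fun v => PI * inv_card (stabV D allH v)).
  set (fB := fun e => (PI - angle D e) * inv_card (stabE D allH e)).
  set (Aw := fun w => sumR (fun x => PI * inv_card (stabV D (stab_comp D w) x)) (fst (gp w))).
  set (Bw := fun w => sumR (fun e => (PI - angle D e) * inv_card (stabE D (stab_comp D w) e)) (snd (gp w))).
  assert (EA : sumR fA rv = sumR Aw reps).
  { rewrite (decomp D (actV D) (actV1 _ D) (actVM _ D) (fun x => x) (fun _ _ => eq_refl) fA)
      with (reps := reps) (g := fun w => fst (gp w)); auto.
    - apply sumR_ext_in. intros w Hw. apply sumR_ext_in. intros x Hx.
      unfold fA. f_equal. apply inv_card_eqv. intros k. unfold stabV. split.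
      + intros [_ Hk']. split; auto.
        destruct (Hgp w) as [[G1 _] _]. apply G1 in Hx. unfold compV in Hx.
        apply (comp_stab D (actV D) (fun x => x) (fun _ _ => eq_refl) w x); auto.
        rewrite Hk'; auto.
      + intros [_ Hk']; split; [exact I|auto].
    - intros h x. unfold fA, stabV. f_equal. apply stab_conj; [apply actV1|apply actVM].
    - intros w Hw. apply (Hgp w). }
  assert (EB : sumR fB re = sumR Bw reps).
  { rewrite (decomp D (actE D) (actE1 _ D) (actEM _ D) (src D) (act_src _ D) fB)
      with (reps := reps) (g := fun w => snd (gp w)); auto.
    - apply sumR_ext_in. intros w Hw. apply sumR_ext_in. intros x Hx.
      unfold fB. f_equal. apply inv_card_eqv. intros k. unfold stabE. split.
      + intros [_ Hk']. split; auto.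
        destruct (Hgp w) as [_ [[G1 _] _]]. apply G1 in Hx. unfold compE in Hx.
        apply (comp_stab D (actE D) (src D) (act_src _ D) w x); auto.
        rewrite Hk'; auto.
      + intros [_ Hk']; split; [exact I|auto].
    - intros h x. unfold fB, stabE. rewrite angle_inv. f_equal.
      apply stab_conj; [apply actE1|apply actEM].
    - intros w Hw. apply (Hgp w). }
  assert (Kw : forall w, kappa D (stab_comp D w) (compV D w) (compE D w) =
                 2 * PI * inv_card (stab_comp D w) - Aw w + Bw w).
  { intros w. destruct (Hgp w) as [_ [_ E]]. rewrite E. reflexivity. }
  assert (K0 : kappa D allH (allV D) (allE D) = 2 * PI * inv_card (@allH H) - sumR Aw reps + sumR Bw reps).
  { rewrite Hkap. unfold kappa_reps. fold fA. fold fB. rewrite EA, EB. reflexivity. }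
  rewrite K0, Kw.
  assert (Hneg : forall w, In w reps -> Bw w - Aw w <= - PI * inv_card (stab_comp D w)).
  { intros w Hw. specialize (Hk w Hw). rewrite Kw in Hk. lra. }
  assert (Hnp : forall w, In w reps -> Bw w - Aw w <= 0).
  { intros w Hw. specialize (Hneg w Hw). pose proof PI_RGT_0.
    pose proof (inv_card_nonneg (stab_comp D w)). nra. }
  assert (Hsum : sumR (fun w => Bw w - Aw w) reps <= Bw j - Aw j).
  { destruct (in_split _ _ Hj) as [l1 [l2 E]]. rewrite E, sumR_app, sumR_cons.
    assert (sumR (fun w => Bw w - Aw w) l1 <= 0).
    { apply sumR_nonpos. intros; apply Hnp. rewrite E. apply in_or_app; auto. }
    assert (sumR (fun w => Bw w - Aw w) l2 <= 0).
    { apply sumR_nonpos. intros; apply Hnp. rewrite E. apply in_or_app; simpl; auto. }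
    lra. }
  rewrite sumR_minus in Hsum.
  assert (Hc : inv_card (@allH H) <= inv_card (stab_comp D j)).
  { apply (inv_card_sub (stab_comp D j) (gone H)). unfold stab_comp.
    rewrite actV1. apply rt_refl. }
  pose proof PI_RGT_0. nra.
Qed.
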